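(* Let $m\ge n$, let $\mathcal{U}$ be an open interval in $\mathbb{R}$, and let $F:\mathcal{U}\rightarrow M_{m\times n}(\mathbb{C})$ be a function each of whose entries is an analytic function on $\mathcal{U}$. Let $\mathcal{Y}(\mathcal{U})=\{x\in\mathcal{U} : F(x)\text{ has repeated singular values}\}$. Then either $\mathcal{Y}(\mathcal{U})=\mathcal{U}$ or $\mathcal{Y}(\mathcal{U})$ has no limit points in $\mathcal{U}$.
   Context: $M_{m\times n}(\mathbb{C})$ denotes the set of $m\times n$ complex matrices; throughout $m\ge n$. The singular values of $A\in M_{m\times n}(\mathbb{C})$ are the $n$ nonnegative square roots of the eigenvalues of $A^{\ast}A$, counted with multiplicity; $A$ has repeated singular values if two of these $n$ values coincide. A function on an open interval is analytic if around each point it is given by a convergent power series in the real variable (complex coefficients allowed). *)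

(* Defs.v *)
From HB Require Import structures.
From mathcomp Require Import all_boot all_order all_algebra.
From mathcomp Require Import all_classical all_reals all_analysis.
From mathcomp Require Import complex.
Set Implicit Arguments. Unset Strict Implicit. Unset Printing Implicit Defensive.
Import Order.TTheory GRing.Theory Num.Theory ComplexField.
Import numFieldNormedType.Exports.
Local Open Scope classical_set_scope.
Local Open Scope ring_scope.

Definition adjmx (R : rcfType) m n (A : 'M[R[i]]_(m, n)) : 'M[R[i]]_(n, m) :=
  (map_mx Num.conj A)^T.

(* A has repeated singular values: the n singular values of A are the
   nonnegative square roots of the eigenvalues of A^* A counted with
   (algebraic) multiplicity, i.e. of the roots s (with multiplicity) of the
   characteristic polynomial of A^* A; two of these coincide. *)
Definition repeated_singular_values (R : rcfType) m n (A : 'M[R[i]]_(m, n)) :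
  Prop :=
  exists s : seq R[i],
    char_poly (adjmx A *m A) = \prod_(z <- s) ('X - z%:P) /\
    ~~ uniq [seq sqrtC z | z <- s].

Definition analytic_on (R : realType) (U : set R) (f : R -> R[i]) : Prop :=
  forall x0, U x0 ->
    exists (a : nat -> R[i]) (r : R), 0 < r /\
      forall x, `|x - x0| < r ->
        (fun N : nat => ComplexField.Normc.normc (f x - \sum_(k < N) a k * ((x - x0)%:C)%C ^+ k))
          @ \oo --> (0 : R).

(* Main.v *)
Require Import Defs.
From HB Require Import structures.
From mathcomp Require Import all_boot all_order all_algebra.
From mathcomp Require Import all_classical all_reals all_analysis.
From mathcomp Require Import complex.
From mathcomp Require Import fingroup perm.
From mathcomp Require Import ring lra zify.
Import Order.TTheory GRing.Theory Num.Theory ComplexField.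
Import numFieldNormedType.Exports.
Local Open Scope classical_set_scope.
Local Open Scope ring_scope.

Section RA.
Variable R : realType.

Definition psum (c : nat -> R) (t : R) (N : nat) : R :=
  \sum_(0 <= k < N) c k * t ^+ k.

Definition ra (x0 : R) (g : R -> R) : Prop :=
  exists (c : nat -> R) (r M : R), 0 < r /\ (forall k, `|c k| * r ^+ k <= M) /\
    forall t, `|t| < r -> psum c t @ \oo --> g (x0 + t).

Lemma ra_cst x0 v : ra x0 (fun _ => v).
Proof.
exists (fun k => if k is 0 then v else 0), 1, `|v|; split => //; split.
  by case=> [|k]; rewrite expr1n mulr1 ?normr0 ?normr_ge0.
move=> t _; rewrite -(cvg_shiftS (psum _ t)) /=.
have -> : (fun n => psum (fun k => if k is 0 then v else 0) t n.+1) = (fun _ => v).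
  apply/funext => n; rewrite /psum big_nat_recl // expr0 mulr1 big1 ?addr0 // => i _.
  by rewrite mul0r.
exact: cvg_cst.
Qed.

Lemma bnd_shrink (c : nat -> R) r M rho : 0 < rho -> rho <= r ->
  (forall k, `|c k| * r ^+ k <= M) -> forall k, `|c k| * rho ^+ k <= M.
Proof.
move=> rho0 le cM k; apply: le_trans (cM k); apply: ler_wpM2l => //.
by apply: lerXn2r; rewrite // nnegrE ltW // (lt_le_trans rho0).
Qed.

Lemma term_bnd (c : nat -> R) r M t k : 0 < r -> (forall k, `|c k| * r ^+ k <= M) ->
  `|c k * t ^+ k| <= M * (`|t| / r) ^+ k.
Proof.
move=> r0 cM; rewrite normrM normrX expr_div_n mulrA ler_pdivlMr ?exprn_gt0 //.
rewrite mulrAC; apply: ler_wpM2r; first by rewrite exprn_ge0.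
exact: cM.
Qed.

Lemma ra_add x0 f g : ra x0 f -> ra x0 g -> ra x0 (fun x => f x + g x).
Proof.
move=> [c [r [M [r0 [cM cf]]]]] [d [s [N [s0 [dN dg]]]]].
have rho0 : 0 < Num.min r s by rewrite lt_min r0 s0.
exists (fun k => c k + d k), (Num.min r s), (M + N); split => //; split.
  move=> k; apply: le_trans (ler_wpM2r _ (ler_normD _ _)) _; first by rewrite exprn_ge0 // ltW.
  rewrite mulrDl; apply: lerD.
  - by apply: bnd_shrink cM k => //; rewrite ge_min lexx.
  - by apply: bnd_shrink dN k => //; rewrite ge_min lexx orbT.
move=> t ht.
have -> : psum (fun k => c k + d k) t = psum c t \+ psum d t.
  by apply/funext => n /=; rewrite /psum -big_split; apply: eq_bigr => k _; rewrite mulrDl.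
apply: cvgD; [apply: cf | apply: dg]; apply: (lt_le_trans ht); rewrite ge_min lexx ?orbT //.
Qed.



Lemma sq_le_pow K : (K * K <= 4 * 2 ^ K)%N.
Proof.
elim: K => [//|K IH]; rewrite expnS; have [small|big] := leqP K 2.
  by case: K small IH => [|[|[|]]].
nia.
Qed.

Definition cprod (c d : nat -> R) k := \sum_(0 <= i < k.+1) c i * d (k - i)%N.

Lemma psum_cprod c d t K :
  psum (cprod c d) t K = \sum_(0 <= i < K) c i * t ^+ i * psum d t (K - i).
Proof.
elim: K => [|K IH]; first by rewrite /psum !big_geq.
rewrite {1}/psum big_nat_recr //= -/(psum (cprod c d) t K) IH.
have E1 : \sum_(0 <= i < K.+1) c i * t ^+ i * psum d t (K.+1 - i) =
   \sum_(0 <= i < K.+1) (c i * t ^+ i * psum d t (K - i) + c i * d (K - i)%N * t ^+ K).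
  apply: eq_big_nat => i /andP[_]; rewrite ltnS => hi.
  rewrite subSn // {1}/psum big_nat_recr //= -/(psum d t (K - i)) mulrDr.
  congr (_ + _).
  have -> : t ^+ K = t ^+ i * t ^+ (K - i) by rewrite -exprD subnKC.
  ring.
rewrite E1 big_split /= [in X in _ = X + _]big_nat_recr //= subnn.
have -> : psum d t 0 = 0 by rewrite /psum big_geq.
rewrite mulr0 addr0; congr (_ + _).
by rewrite /cprod big_distrl.
Qed.

Lemma bnd_ge0 (c : nat -> R) r M : 0 < r -> (forall k, `|c k| * r ^+ k <= M) -> 0 <= M.
Proof.
move=> r0 cM; apply: le_trans (cM 0%N); rewrite mulr_ge0 // exprn_ge0 // ltW.
Qed.

Lemma tail_bnd d t rho Nb m K : 0 < rho -> `|t| <= rho ->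
  (forall k, `|d k| * rho ^+ k <= Nb) -> (m <= K)%N ->
  `|psum d t K - psum d t m| <= (Nb * (`|t| / rho) ^+ m) *+ (K - m).
Proof.
move=> r0 tr dN mK; rewrite /psum (big_cat_nat (leq0n m) mK) /= addrAC subrr add0r.
rewrite -sumr_const_nat; apply: le_trans (ler_norm_sum _ _ _) _.
apply: ler_sum_nat => k /andP[mk _]; apply: le_trans (@term_bnd _ _ _ _ _ r0 dN) _.
apply: ler_wpM2l; first exact: @bnd_ge0 _ _ _ r0 dN.
apply: ler_wiXn2l => //; first by rewrite divr_ge0 // ltW.
by rewrite ler_pdivrMr // mul1r.
Qed.

Lemma ler_wnat (z : R) a b : 0 <= z -> (a <= b)%N -> z *+ a <= z *+ b.
Proof. by move=> z0 ab; rewrite -(subnKC ab) mulrnDr lerDl mulrn_wge0. Qed.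

Lemma err_bnd c d t rho M Nb K : 0 < rho -> `|t| <= rho ->
  (forall k, `|c k| * rho ^+ k <= M) -> (forall k, `|d k| * rho ^+ k <= Nb) ->
  `|psum c t K * psum d t K - psum (cprod c d) t K| <=
    4 * (M * Nb) * (2 * (`|t| / rho)) ^+ K.
Proof.
move=> r0 tr cM dN.
have M0 := @bnd_ge0 _ _ _ r0 cM; have N0 := @bnd_ge0 _ _ _ r0 dN.
set q := `|t| / rho.
have q0 : 0 <= q by rewrite divr_ge0 // ltW.
rewrite psum_cprod {1}/psum big_distrl /= -sumrB.
apply: le_trans (ler_norm_sum _ _ _) _.
apply: (@le_trans _ _ (\sum_(0 <= i < K) (M * Nb * q ^+ K) *+ K)).
  apply: ler_sum_nat => i /andP[_ iK].
  rewrite -mulrBr normrM.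
  apply: le_trans (ler_pM (normr_ge0 _) (normr_ge0 _) (@term_bnd _ _ _ _ _ r0 cM)
     (@tail_bnd _ _ _ _ _ _ r0 tr dN (leq_subr i K))) _.
  rewrite -/q subKn; last exact: ltnW.
  have eK : q ^+ K = q ^+ i * q ^+ (K - i) by rewrite -exprD subnKC // ltnW.
  rewrite mulrnAr.
  have -> : M * q ^+ i * (Nb * q ^+ (K - i)) = M * Nb * q ^+ K.
    by rewrite eK; ring.
  by apply: ler_wnat; [rewrite !mulr_ge0 // exprn_ge0 | exact: (ltnW iK)].
rewrite sumr_const_nat subn0 -mulrnA -[_ *+ (K * K)]mulr_natr [(2 * q) ^+ K]exprMn.
have hK : ((K * K)%:R : R) <= 4 * 2 ^+ K.
  by rewrite -natrX -(natrM R 4) ler_nat sq_le_pow.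
apply: le_trans (ler_wpM2l _ hK) _; first by rewrite !mulr_ge0 // exprn_ge0.
by rewrite le_eqVlt; apply/orP; left; apply/eqP; ring.
Qed.



Lemma ra_mul x0 f g : ra x0 f -> ra x0 g -> ra x0 (fun x => f x * g x).
Proof.
move=> [c [r [M [r0 [cM cf]]]]] [d [s [Nb [s0 [dN dg]]]]].
set rho := Num.min r s.
have rho0 : 0 < rho by rewrite lt_min r0 s0.
have hr : rho <= r by rewrite ge_min lexx.
have hs : rho <= s by rewrite ge_min lexx orbT.
have cM' := @bnd_shrink c r M rho rho0 hr cM.
have dN' := @bnd_shrink d s Nb rho rho0 hs dN.
have M0 := @bnd_ge0 _ _ _ r0 cM; have N0 := @bnd_ge0 _ _ _ s0 dN.
exists (cprod c d), (rho / 2), (M * Nb); split; first by rewrite divr_gt0.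
split.
  move=> k; rewrite /cprod.
  have h2 : `|rho / 2| / rho = 2^-1.
    by rewrite ger0_norm ?divr_ge0 ?ltW // mulrAC divff ?mul1r // gt_eqF.
  apply: (@le_trans _ _ (\sum_(0 <= i < k.+1) M * Nb * 2^-1 ^+ k)).
    rewrite -[(rho/2)^+k]ger0_norm; last by rewrite exprn_ge0 // divr_ge0 // ltW.
    rewrite -normrM big_distrl /=.
    apply: le_trans (ler_norm_sum _ _ _) _.
    apply: ler_sum_nat => i /andP[_]; rewrite ltnS => ik.
    have ek : (rho/2)^+k = (rho/2)^+i * (rho/2)^+(k-i) by rewrite -exprD subnKC.
    have -> : c i * d (k - i)%N * (rho / 2) ^+ k =
        (c i * (rho/2)^+i) * (d (k - i)%N * (rho/2)^+(k - i)) by rewrite ek; ring.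
    rewrite normrM.
    apply: le_trans (ler_pM (normr_ge0 _) (normr_ge0 _)
       (@term_bnd _ _ _ _ _ rho0 cM') (@term_bnd _ _ _ _ _ rho0 dN')) _.
    rewrite h2.
    have ek2 : (2^-1 : R)^+k = 2^-1^+i * 2^-1^+(k-i) by rewrite -exprD subnKC.
    by rewrite ek2 le_eqVlt; apply/orP; left; apply/eqP; ring.
  rewrite sumr_const_nat subn0 -[_ *+ k.+1]mulr_natr -mulrA.
  apply: ler_piMr; first by rewrite mulr_ge0.
  rewrite exprVn mulrC ler_pdivrMr ?exprn_gt0 // mul1r -natrX ler_nat.
  exact: ltn_expl.
move=> t ht.
have htr : `|t| <= rho by lra.
set q := `|t| / rho.
have q2 : `|2 * q| < 1.
  have q0 : 0 <= q by rewrite /q divr_ge0 // ltW.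
  rewrite ger0_norm; last by rewrite mulr_ge0.
  rewrite /q mulrA ltr_pdivrMr // mul1r; lra.
have Herr : (fun K => psum c t K * psum d t K - psum (cprod c d) t K) @ \oo --> (0:R).
  have H : (fun K => 4*(M*Nb) * (2*q)^+K) @ \oo --> (0:R).
    rewrite -(mulr0 (4*(M*Nb))); apply: cvgM; [exact: cvg_cst | exact: cvg_expr].
  apply: (@squeeze_cvgr _ _ _ _ (fun K => - (4*(M*Nb) * (2*q)^+K))
                                (fun K => 4*(M*Nb) * (2*q)^+K)).
  - by apply: nearW => K /=; rewrite -ler_norml; exact: err_bnd.
  - rewrite -oppr0; exact: (cvgN H).
  - exact: H.
have -> : psum (cprod c d) t = (psum c t \* psum d t) -
    (fun K => psum c t K * psum d t K - psum (cprod c d) t K).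
  by apply/funext => K /=; rewrite opprB addrC subrK.
rewrite -[f (x0 + t) * g (x0 + t)]subr0; apply: cvgB => //; apply: cvgM.
  by apply: cf; lra.
by apply: dg; lra.

Qed.

End RA.
Arguments psum {R}. Arguments ra {R}. Arguments cprod {R}.
Arguments ra_add {R x0 f g}. Arguments ra_mul {R x0 f g}. Arguments ra_cst {R}.

Section RA2.
Variable R : realType.

Lemma geo_bnd (q : R) m n : 0 <= q -> 2 * q <= 1 ->
  \sum_(m <= k < n) q ^+ k <= 2 * q ^+ m.
Proof.
move=> q0 q2.
have tele : forall j, (1 - q) * \sum_(m <= k < m + j) q ^+ k = q ^+ m - q ^+ (m + j).
  elim=> [|j IH]; first by rewrite addn0 big_geq // mulr0 subrr.
  by rewrite addnS big_nat_recr ?leq_addr //= mulrDr IH exprS; ring.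
have [mn|nm] := leqP m n; last first.
  by rewrite big_geq ?mulr_ge0 ?exprn_ge0 // ltnW.
rewrite -(subnKC mn); have := tele (n - m)%N.
have S0 : 0 <= \sum_(m <= k < m + (n - m)) q ^+ k by apply: sumr_ge0 => k _; exact: exprn_ge0.
have b0 : 0 <= q ^+ (m + (n - m)) by exact: exprn_ge0.
move: S0 b0; set S := \sum_(_ <= _ < _) _; set b := q ^+ (m + _); set a := q ^+ m.
move=> S0 b0 h; nra.
Qed.

Lemma ev_gt (K : nat) : \forall N \near \oo, (K < N)%N.
Proof. by exists K.+1 => // n /=. Qed.

Lemma ra_isolated x0 (g : R -> R) : ra x0 g ->
  (forall e, 0 < e -> exists t, [/\ t != 0, `|t| < e & g (x0 + t) = 0]) ->
  exists2 d, 0 < d & forall t, `|t| < d -> g (x0 + t) = 0.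
Proof.
move=> [c [r [M [r0 [cM cg]]]]] Hz.
have M0 := @bnd_ge0 _ _ _ _ r0 cM.
have [allz|] := pselect (forall k, c k = 0).
  exists r => // t tr.
  have H0 : psum c t @ \oo --> (0:R).
    have -> : psum c t = fun _ => 0.
      by apply/funext => N; rewrite /psum big1 // => k _; rewrite allz mul0r.
    exact: cvg_cst.
  exact: (cvg_unique _ (cg t tr) H0).
move=> /existsNP [k0 ck0].
have exK : exists k, c k != 0 by exists k0; apply/eqP.
case: (ex_minnP exK) => K cK Kmin.
have below : forall k, (k < K)%N -> c k = 0.
  move=> k kK; apply/eqP; apply/negPn/negP => /Kmin; rewrite leqNgt kK.
  done.
exfalso.
have key : forall t, `|t| <= r / 2 ->
    `|g (x0 + t) - c K * t ^+ K| <= 2 * M * (`|t| / r) ^+ K.+1.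
  move=> t tr.
  have tr' : `|t| < r by lra.
  set q := `|t| / r.
  have q0 : 0 <= q by rewrite /q divr_ge0 // ltW.
  have q2 : 2 * q <= 1 by rewrite /q mulrA ler_pdivrMr // mul1r; lra.
  apply: (ler_cvg_to (cvg_norm (cvgB (cg t tr') (cvg_cst (c K * t ^+ K))))
           (cvg_cst (2 * M * q ^+ K.+1))).
  apply: filterS (ev_gt K) => N /= KN.
  change (`|psum c t N - c K * t ^+ K| <= 2 * M * q ^+ K.+1).
  rewrite /psum (big_cat_nat (leq0n K) (ltnW KN)) /= (big_ltn KN) /=.
  have -> : \sum_(0 <= i < K) c i * t ^+ i = 0.
    by rewrite big1_seq // => k /andP[_]; rewrite mem_index_iota => /andP[_ kK]; rewrite below // mul0r.
  rewrite add0r addrAC subrr add0r.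
  apply: le_trans (ler_norm_sum _ _ _) _.
  apply: (@le_trans _ _ (\sum_(K.+1 <= k < N) M * q ^+ k)).
    by apply: ler_sum_nat => k _; exact: (@term_bnd _ _ _ _ _ _ r0 cM).
  rewrite -mulr_sumr (mulrC 2 M) -mulrA ler_wpM2l //.
  exact: geo_bnd.
have cK0 : 0 < `|c K| by rewrite normr_gt0.
pose e := Num.min (r / 2) (`|c K| * r ^+ K.+1 / (2 * M + 1)).
have e0 : 0 < e.
  rewrite lt_min; apply/andP; split; first by rewrite divr_gt0.
  by apply: divr_gt0; [rewrite mulr_gt0 // exprn_gt0 | lra].
have [t [t0 te gt0]] := Hz e e0.
have tr2 : `|t| <= r / 2 by apply: ltW; apply: (lt_le_trans te); rewrite ge_min lexx.
have tc : `|t| < `|c K| * r ^+ K.+1 / (2 * M + 1).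
  by apply: (lt_le_trans te); rewrite ge_min lexx orbT.
have := key t tr2; rewrite gt0 add0r normrN normrM normrX expr_div_n mulrA.
rewrite ler_pdivlMr ?exprn_gt0 // [`|t| ^+ K.+1]exprS.
rewrite ltr_pdivlMr in tc; last by lra.
have tpos : 0 < `|t| by rewrite normr_gt0.
have T0 : 0 < `|t| ^+ K by rewrite exprn_gt0.
move: tc T0 tpos; set a := `|c K|; set P := r ^+ K.+1; set T := `|t| ^+ K; set u := `|t|.
move=> tc T0 tpos h; nra.
Qed.

End RA2.
Arguments ra_isolated {R}.

Section G.
Variable R : realType.

Lemma nbhsP (x : R) (P : set R) :
  nbhs x P <-> exists2 e, 0 < e & forall y, `|x - y| < e -> P y.
Proof.
rewrite nbhs_ballP; split => [[e e0 H]|[e e0 H]]; exists e => //.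
Qed.

Lemma openP (S : set R) :
  (forall x, S x -> exists2 e, 0 < e & forall y, `|x - y| < e -> S y) -> open S.
Proof. by move=> H; rewrite openE => x Sx; rewrite /interior; apply/nbhsP; exact: H. Qed.

Lemma open_nbhsP (S : set R) x : open S -> S x ->
  exists2 e, 0 < e & forall y, `|x - y| < e -> S y.
Proof. by rewrite openE => H Sx; apply/nbhsP; exact: H. Qed.

Definition vn (g : R -> R) x := exists2 d, 0 < d & forall t, `|t| < d -> g (x + t) = 0.
Definition acc (g : R -> R) x :=
  forall e, 0 < e -> exists t, [/\ t != 0, `|t| < e & g (x + t) = 0].

Lemma ident_global (U : set R) (g : R -> R) :
  open U -> is_interval U -> (forall x, U x -> ra x g) ->
  forall x0, U x0 -> acc g x0 -> forall y, U y -> g y = 0.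
Proof.
move=> oU iU rag x0 Ux0 acc0.
pose S := [set x | U x /\ vn g x].
pose W := [set x | U x /\ ~ vn g x].
have SU : S = U.
  have := (connected_intervalP U).2 iU.
  apply.
  - by exists x0; split => //; exact: ra_isolated (rag _ Ux0) acc0.
  - exists S; last by apply/seteqP; split => x; [move=> Sx; split => //; case: Sx | case].
    apply: openP => x [Ux [d d0 Hd]].
    have [e e0 He] := @open_nbhsP U x oU Ux.
    exists (Num.min d e); first by rewrite lt_min d0 e0.
    move=> y hy; split; first by apply: He; apply: lt_le_trans hy _; rewrite ge_min lexx orbT.
    have hyd : `|x - y| < d by apply: lt_le_trans hy _; rewrite ge_min lexx.
    exists (d - `|x - y|); first by rewrite subr_gt0.
    move=> t ht; have -> : y + t = x + (y - x + t) by ring.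
    apply: Hd; apply: le_lt_trans (ler_normD _ _) _; rewrite distrC; lra.
  - exists (~` W).
      apply: open_closedC; apply: openP => x [Ux nvx].
      have nacc : ~ acc g x by move=> ax; apply: nvx; exact: ra_isolated (rag _ Ux) ax.
      have [e e0 He] : exists2 e, 0 < e & forall t, t != 0 -> `|t| < e -> g (x + t) <> 0.
        apply: contrapT => H; apply: nacc => e e0.
        apply: contrapT => H2; apply: H; exists e => // t t0 te gt0; apply: H2.
        by exists t; split.
      have [e' e'0 He'] := @open_nbhsP U x oU Ux.
      exists (Num.min e e'); first by rewrite lt_min e0 e'0.
      move=> y hy; split; first by apply: He'; apply: lt_le_trans hy _; rewrite ge_min lexx orbT.
      move=> [d d0 Hd].
      have gy : g y = 0 by have := Hd 0; rewrite normr0 addr0; apply.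
      have [yx|yx] := eqVneq y x.
        by apply: nvx; rewrite -yx; exists d.
      apply: (He (y - x)); first by rewrite subr_eq0.
        by rewrite distrC; apply: lt_le_trans hy _; rewrite ge_min lexx.
      by rewrite addrC subrK.
    apply/seteqP; split => x.
      by move=> [Ux vx]; split => // -[_]; apply.
    by move=> [Ux nW]; split => //; apply: contrapT => nv; apply: nW.
move=> y Uy; have : S y by rewrite SU.
by move=> [_ [d d0 Hd]]; have := Hd 0; rewrite normr0 addr0; apply.
Qed.

End G.
Arguments ident_global {R}.

Section Closure.
Variables (T : Type) (V : comNzRingType) (P : (T -> V) -> Prop).
Hypotheses (Padd : forall f g, P f -> P g -> P (fun x => f x + g x))
           (Pmul : forall f g, P f -> P g -> P (fun x => f x * g x))
           (Pcst : forall v, P (fun _ => v)).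

Lemma P_sum (I : Type) (r : seq I) (Q : pred I) (F : I -> T -> V) :
  (forall i, P (F i)) -> P (fun x => \sum_(i <- r | Q i) F i x).
Proof.
move=> HF; elim: r => [|i r IH].
  have -> : (fun x => \sum_(i <- [::] | Q i) F i x) = fun _ => 0.
    by apply/funext=> x; rewrite big_nil.
  exact: Pcst.
have -> : (fun x => \sum_(j <- i :: r | Q j) F j x) =
    fun x => (if Q i then F i x else 0) + \sum_(j <- r | Q j) F j x.
  by apply/funext => x; rewrite big_cons; case: (Q i); rewrite ?add0r.
by apply: Padd => //; case: (Q i) => //; exact: HF.
Qed.

Lemma P_prod (I : Type) (r : seq I) (Q : pred I) (F : I -> T -> V) :
  (forall i, P (F i)) -> P (fun x => \prod_(i <- r | Q i) F i x).
Proof.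
move=> HF; elim: r => [|i r IH].
  have -> : (fun x => \prod_(i <- [::] | Q i) F i x) = fun _ => 1.
    by apply/funext=> x; rewrite big_nil.
  exact: Pcst.
have -> : (fun x => \prod_(j <- i :: r | Q j) F j x) =
    fun x => (if Q i then F i x else 1) * \prod_(j <- r | Q j) F j x.
  by apply/funext => x; rewrite big_cons; case: (Q i); rewrite ?mul1r.
by apply: Pmul => //; case: (Q i) => //; exact: HF.
Qed.

Lemma P_det n (A : T -> 'M[V]_n) :
  (forall i j, P (fun x => A x i j)) -> P (fun x => \det (A x)).
Proof.
move=> HA.
have -> : (fun x => \det (A x)) =
    fun x => \sum_(s : 'S_n) ((-1) ^+ s * \prod_i A x i (s i)) by [].
apply: P_sum => s; apply: Pmul => //; apply: P_prod => i; exact: HA.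
Qed.

Lemma P_sub f g : P f -> P g -> P (fun x => f x - g x).
Proof.
move=> hf hg; have -> : (fun x => f x - g x) = fun x => f x + (-1) * g x.
  by apply/funext=> x; rewrite mulN1r.
by apply: Padd => //; apply: Pmul.
Qed.

Lemma P_natmul f n : P f -> P (fun x => f x *+ n).
Proof.
move=> hf; have -> : (fun x => f x *+ n) = fun x => f x * n%:R.
  by apply/funext=> x; rewrite mulr_natr.
by apply: Pmul.
Qed.

End Closure.

Section CL.
Variable R : realType.
Local Notation C := R[i].
Local Notation ReC := (@complex.Re R).
Local Notation ImC := (@complex.Im R).

Definition cla (x0 : R) (f : R -> C) :=
  ra x0 (fun x => ReC (f x)) /\ ra x0 (fun x => ImC (f x)).

Lemma ra_sub x0 (f g : R -> R) : ra x0 f -> ra x0 g -> ra x0 (fun x => f x - g x).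
Proof.
move=> hf hg; have -> : (fun x => f x - g x) = fun x => f x + (-1) * g x.
  by apply/funext=> x; rewrite mulN1r.
exact: ra_add hf (ra_mul (ra_cst x0 (-1)) hg).
Qed.

Lemma cla_cst x0 v : cla x0 (fun _ => v).
Proof. by split; apply: ra_cst. Qed.

Lemma cla_add x0 f g : cla x0 f -> cla x0 g -> cla x0 (fun x => f x + g x).
Proof.
move=> [f1 f2] [g1 g2]; split.
  have -> : (fun x => ReC (f x + g x)) = fun x => ReC (f x) + ReC (g x).
    by apply/funext => x; case: (f x) (g x) => [a b] [c d].
  exact: ra_add.
have -> : (fun x => ImC (f x + g x)) = fun x => ImC (f x) + ImC (g x).
  by apply/funext => x; case: (f x) (g x) => [a b] [c d].
exact: ra_add.
Qed.

Lemma cla_mul x0 f g : cla x0 f -> cla x0 g -> cla x0 (fun x => f x * g x).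
Proof.
move=> [f1 f2] [g1 g2]; split.
  have -> : (fun x => ReC (f x * g x)) = fun x => ReC (f x) * ReC (g x) - ImC (f x) * ImC (g x).
    by apply/funext => x; case: (f x) (g x) => [a b] [c d].
  by apply: ra_sub; apply: ra_mul.
have -> : (fun x => ImC (f x * g x)) = fun x => ReC (f x) * ImC (g x) + ImC (f x) * ReC (g x).
  by apply/funext => x; case: (f x) (g x) => [a b] [c d].
by apply: ra_add; apply: ra_mul.
Qed.

Lemma cla_conj x0 f : cla x0 f -> cla x0 (fun x => Num.conj (f x)).
Proof.
move=> [f1 f2]; split.
  have -> : (fun x => ReC (Num.conj (f x))) = fun x => ReC (f x).
    by apply/funext => x; case: (f x) => [a b].
  exact: f1.
have -> : (fun x => ImC (Num.conj (f x))) = fun x => (-1) * ImC (f x).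
  by apply/funext => x; case: (f x) => [a b] /=; rewrite mulN1r.
exact: ra_mul (ra_cst x0 (-1)) f2.
Qed.

Lemma cla_det x0 n (A : R -> 'M[C]_n) :
  (forall i j, cla x0 (fun x => A x i j)) -> cla x0 (fun x => \det (A x)).
Proof. by apply: P_det; [apply: cla_add | apply: cla_mul | apply: cla_cst]. Qed.

Lemma cla_sum x0 (I : Type) (r : seq I) (Q : pred I) (F : I -> R -> C) :
  (forall i, cla x0 (F i)) -> cla x0 (fun x => \sum_(i <- r | Q i) F i x).
Proof. by apply: P_sum; [apply: cla_add | apply: cla_cst]. Qed.

Definition pcl x0 (P : R -> {poly C}) := forall k, cla x0 (fun x => (P x)`_k).

Lemma pcl_add x0 f g : pcl x0 f -> pcl x0 g -> pcl x0 (fun x => f x + g x).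
Proof.
move=> hf hg k; have -> : (fun x => (f x + g x)`_k) = fun x => (f x)`_k + (g x)`_k.
  by apply/funext => x; rewrite coefD.
exact: cla_add.
Qed.

Lemma pcl_mul x0 f g : pcl x0 f -> pcl x0 g -> pcl x0 (fun x => f x * g x).
Proof.
move=> hf hg k; have -> : (fun x => (f x * g x)`_k) =
    fun x => \sum_(j < k.+1) (f x)`_j * (g x)`_(k - j).
  by apply/funext => x; rewrite coefM.
apply: cla_sum => j; exact: cla_mul.
Qed.

Lemma pcl_cst x0 v : pcl x0 (fun _ => v).
Proof. by move=> k; apply: cla_cst. Qed.

Lemma pcl_det x0 n (A : R -> 'M[{poly C}]_n) :
  (forall i j, pcl x0 (fun x => A x i j)) -> pcl x0 (fun x => \det (A x)).
Proof. by apply: P_det; [apply: pcl_add | apply: pcl_mul | apply: pcl_cst]. Qed.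

Lemma pcl_polyC x0 f : cla x0 f -> pcl x0 (fun x => (f x)%:P).
Proof.
move=> hf k; have -> : (fun x => ((f x)%:P)`_k) = fun x => if k == 0%N then f x else 0.
  by apply/funext => x; rewrite coefC.
by case: (k == 0%N) => //; apply: cla_cst.
Qed.

Lemma pcl_charpoly x0 n (A : R -> 'M[C]_n) :
  (forall i j, cla x0 (fun x => A x i j)) -> pcl x0 (fun x => char_poly (A x)).
Proof.
move=> hA; apply: pcl_det => i j.
have -> : (fun x => char_poly_mx (A x) i j) = fun x => 'X *+ (i == j) - (A x i j)%:P.
  by apply/funext => x; rewrite !mxE.
apply: (@P_sub _ _ (pcl x0) (@pcl_add x0) (@pcl_mul x0) (@pcl_cst x0)).
  exact: pcl_cst.
exact: pcl_polyC.
Qed.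

Lemma pcl_deriv x0 P : pcl x0 P -> pcl x0 (fun x => (P x)^`()).
Proof.
move=> hP k; have -> : (fun x => ((P x)^`())`_k) = fun x => (P x)`_k.+1 *+ k.+1.
  by apply/funext => x; rewrite coef_deriv.
by apply: (@P_natmul _ _ (cla x0) (@cla_mul x0) (@cla_cst x0)); exact: hP.
Qed.

Definition syl (p q : {poly C}) d1 d2 : 'M[C]_(d1 + d2) :=
  \matrix_(i < d1 + d2, j < d1 + d2) match @fintype.split d1 d2 i with
                 | inl k => p`_(j - k) *+ (k <= j)
                 | inr k => q`_(j - k) *+ (k <= j) end.

Lemma resultantE (p q : {poly C}) d1 d2 : (size q).-1 = d1 -> (size p).-1 = d2 ->
  resultant p q = \det (syl p q d1 d2).
Proof.
move=> <- <-; rewrite /resultant; congr (determinant _); apply/matrixP => i j.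
by rewrite Sylvester_mxE mxE.
Qed.

Lemma cla_resultant x0 (P Q : R -> {poly C}) d1 d2 : pcl x0 P -> pcl x0 Q ->
  (forall x, (size (Q x)).-1 = d1) -> (forall x, (size (P x)).-1 = d2) ->
  cla x0 (fun x => resultant (P x) (Q x)).
Proof.
move=> hP hQ sQ sP.
have -> : (fun x => resultant (P x) (Q x)) = fun x => \det (syl (P x) (Q x) d1 d2).
  by apply/funext => x; apply: resultantE.
apply: cla_det => i j.
have -> : (fun x => syl (P x) (Q x) d1 d2 i j) = fun x =>
    match fintype.split i with
    | inl k => (P x)`_(j - k) *+ (k <= j)
    | inr k => (Q x)`_(j - k) *+ (k <= j) end.
  by apply/funext => x; rewrite mxE.
case: (fintype.split i) => k.
  by apply: (@P_natmul _ _ (cla x0) (@cla_mul x0) (@cla_cst x0)); exact: hP.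
by apply: (@P_natmul _ _ (cla x0) (@cla_mul x0) (@cla_cst x0)); exact: hQ.
Qed.

End CL.
Arguments cla {R}. Arguments pcl {R}. Arguments cla_resultant {R}. Arguments pcl_charpoly {R}.
Arguments pcl_deriv {R}. Arguments cla_sum {R}. Arguments cla_mul {R}. Arguments cla_conj {R}.
Arguments cla_cst {R}. Arguments cla_add {R}. Arguments ra_sub {R}.

Lemma nonuniq_rem (T : eqType) (s : seq T) : ~~ uniq s ->
  exists z, z \in s /\ z \in rem z s.
Proof.
elim: s => [//|a s IH] /=; rewrite negb_and negbK => /orP[ain|nu].
  by exists a; rewrite /= eqxx in_cons eqxx.
have [w [ws wr]] := IH nu; exists w; split; first by rewrite in_cons ws orbT.
by rewrite /=; case: ifP => _ //; rewrite in_cons wr orbT.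
Qed.

Section Alg.
Variable R : rcfType.
Local Notation C := R[i].

Lemma root_deriv_XsubC (z : C) (Q : {poly C}) :
  root (('X - z%:P) * Q)^`() z = root Q z.
Proof.
by rewrite derivM derivXsubC mul1r /root !hornerE subrr mul0r addr0.
Qed.

Lemma rep_iff (p : {poly C}) : p \is monic ->
  (exists s : seq C, p = \prod_(z <- s) ('X - z%:P) /\ ~~ uniq [seq sqrtC z | z <- s])
  <-> resultant p p^`() = 0.
Proof.
move=> mp; have p0 : p != 0 by apply: monic_neq0.
split.
  move=> [s [ps nu]].
  rewrite (map_inj_uniq (@sqrtC_inj C)) in nu.
  have [z [zs zr]] := @nonuniq_rem _ _ nu.
  have rp : root p z by rewrite ps root_prod_XsubC.
  have rp' : root p^`() z.
    rewrite ps (big_rem z) //= root_deriv_XsubC (big_rem z) //= rootM root_XsubC eqxx //.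
  apply/eqP; rewrite resultant_eq0.
  apply: (@root_size_gt1 _ z); last by rewrite root_gcd rp rp'.
  by rewrite gcdp_eq0 negb_and p0.
move/eqP; rewrite resultant_eq0 => hg.
have [z rz] : exists z, root (gcdp p p^`()) z.
  by apply/closed_rootP; rewrite neq_ltn hg orbT.
rewrite root_gcd in rz; case/andP: rz => rp rp'.
have [s ps] := closed_field_poly_normal p.
rewrite (monicP mp) scale1r in ps.
exists s; split => //.
apply/negP => us.
have zs : z \in s by rewrite -root_prod_XsubC -ps.
move: rp'; rewrite ps (big_rem z) //= root_deriv_XsubC root_prod_XsubC.
rewrite (map_inj_uniq (@sqrtC_inj C)) in us.
by rewrite mem_rem_uniqF.
Qed.

End Alg.

Section AN.
Variable R : realType.
Local Notation C := R[i].
Local Notation ReC := (@complex.Re R).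
Local Notation ImC := (@complex.Im R).

Lemma CX (t : R) k : ((t%:C)%C ^+ k : C) = Complex (t ^+ k) 0.
Proof. by rewrite -rmorphXn. Qed.
Lemma ReD' (u v : C) : ReC (u + v) = ReC u + ReC v.
Proof. by case: u v => ? ? [? ?]. Qed.
Lemma ImD' (u v : C) : ImC (u + v) = ImC u + ImC v.
Proof. by case: u v => ? ? [? ?]. Qed.
Lemma ReM' (z : C) (y : R) : ReC (z * Complex y 0) = ReC z * y.
Proof. by case: z => p q /=; rewrite mulr0 subr0. Qed.
Lemma ImM' (z : C) (y : R) : ImC (z * Complex y 0) = ImC z * y.
Proof. by case: z => p q /=; rewrite mulr0 add0r. Qed.

Lemma ra_of_series x0 (h : R -> R) (c : nat -> R) r (E : R -> nat -> R) :
  0 < r ->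
  (forall t, `|t| < r -> forall N, `|h (x0 + t) - psum c t N| <= E t N) ->
  (forall t, `|t| < r -> E t @ \oo --> (0:R)) ->
  ra x0 h.
Proof.
move=> r0 hE E0.
have cv : forall t, `|t| < r -> psum c t @ \oo --> h (x0 + t).
  move=> t tr.
  have e0 : (fun N => h (x0 + t) - psum c t N) @ \oo --> (0:R).
    apply: (@squeeze_cvgr _ _ _ _ (fun N => - E t N) (E t)).
    - by apply: nearW => N /=; rewrite -ler_norml; exact: hE.
    - by rewrite -oppr0; exact: (cvgN (E0 t tr)).
    - exact: E0.
  have -> : psum c t = (fun _ => h (x0 + t)) - (fun N => h (x0 + t) - psum c t N).
    by apply/funext => N /=; rewrite opprB addrC subrK.
  by have := cvgB (cvg_cst (h (x0 + t))) e0; rewrite subr0; apply.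
have r2 : `|r / 2| < r by rewrite ger0_norm ?divr_ge0 ?ltW //; lra.
set u := fun k => c k * (r / 2) ^+ k.
have u0 : u @ \oo --> (0:R).
  have Hc := cv _ r2.
  have Hs : (fun k => psum c (r / 2) k.+1) @ \oo --> h (x0 + r / 2).
    by rewrite (cvg_shiftS (psum c (r/2))).
  have -> : u = (fun k => psum c (r / 2) k.+1) - psum c (r / 2).
    apply/funext => k; change (u k = psum c (r / 2) k.+1 - psum c (r / 2) k).
    by rewrite /psum big_nat_recr //= addrAC subrr add0r.
  by rewrite -(subrr (h (x0 + r / 2))); apply: cvgB.
have [N _ HN] : \forall k \near \oo, `|u k| < 1.
  move/cvgrPdist_lt : u0 => /(_ 1 ltr01); apply: filterS => k /=.
  by rewrite sub0r normrN.
exists c, (r / 2), (1 + \sum_(k < N) `|u k|); split; first by rewrite divr_gt0.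
split; last by move=> t tr; apply: cv; lra.
move=> k.
have -> : `|c k| * (r / 2) ^+ k = `|u k|.
  by rewrite /u normrM normrX [`|r / 2|]ger0_norm // divr_ge0 // ltW.
have [kN|Nk] := ltnP k N.
  have S0 : 0 <= \sum_(j < N) `|u j| by apply: sumr_ge0 => j _.
  rewrite (bigD1 (Ordinal kN)) //=.
  have S1 : 0 <= \sum_(j < N | j != Ordinal kN) `|u j| by apply: sumr_ge0 => j _.
  lra.
have := HN k Nk; rewrite /= => h1.
have S0 : 0 <= \sum_(j < N) `|u j| by apply: sumr_ge0 => j _.
lra.
Qed.

Lemma an_cla (U : set R) f x0 : analytic_on U f -> U x0 -> cla x0 f.
Proof.
move=> hf Ux0; have [a [r [r0 H]]] := hf x0 Ux0.
have Hs : forall t, `|t| < r ->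
    (fun N => Normc.normc (f (x0 + t) - \sum_(k < N) a k * (t%:C)%C ^+ k)) @ \oo --> (0:R).
  move=> t tr; have := H (x0 + t); rewrite addrAC subrr add0r; exact.
have ReS : forall t N, ReC (\sum_(k < N) a k * (t%:C)%C ^+ k) = psum (fun k => ReC (a k)) t N.
  move=> t; elim=> [|N IH]; first by rewrite big_ord0 /psum big_geq.
  by rewrite big_ord_recr /psum big_nat_recr //= -/(psum _ t N) -IH ReD' CX ReM'.
have ImS : forall t N, ImC (\sum_(k < N) a k * (t%:C)%C ^+ k) = psum (fun k => ImC (a k)) t N.
  move=> t; elim=> [|N IH]; first by rewrite big_ord0 /psum big_geq.
  by rewrite big_ord_recr /psum big_nat_recr //= -/(psum _ t N) -IH ImD' CX ImM'.
have nRe : forall z : C, `|ReC z| <= Normc.normc z.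
  case=> p q /=; rewrite -sqrtr_sqr; apply: ler_wsqrtr; rewrite lerDl; exact: sqr_ge0.
have nIm : forall z : C, `|ImC z| <= Normc.normc z.
  case=> p q /=; rewrite -sqrtr_sqr; apply: ler_wsqrtr; rewrite lerDr; exact: sqr_ge0.
split.
  apply: (@ra_of_series x0 _ (fun k => ReC (a k)) r
     (fun t N => Normc.normc (f (x0 + t) - \sum_(k < N) a k * (t%:C)%C ^+ k))) => //.
  move=> t tr N; rewrite -ReS; apply: le_trans (nRe _).
  by case: (f _) (\sum_(_ < _) _) => [p q] [p' q'].
apply: (@ra_of_series x0 _ (fun k => ImC (a k)) r
   (fun t N => Normc.normc (f (x0 + t) - \sum_(k < N) a k * (t%:C)%C ^+ k))) => //.
move=> t tr N; rewrite -ImS; apply: le_trans (nIm _).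
by case: (f _) (\sum_(_ < _) _) => [p q] [p' q'].
Qed.

End AN.
Arguments an_cla {R}.

Section Final.
Variable R : realType.
Local Notation C := R[i].
Local Notation ReC := (@complex.Re R).
Local Notation ImC := (@complex.Im R).

Lemma size_deriv_monic (p : {poly C}) n : p \is monic -> size p = n.+1 ->
  size p^`() = n.
Proof.
move=> mp sp; have p0 : p != 0 by apply: monic_neq0.
have lt := lt_size_deriv p0; rewrite sp ltnS in lt.
case: n sp lt => [|n] sp lt; first by apply/eqP; rewrite -leqn0.
apply/eqP; rewrite eqn_leq lt /=.
have lc : p`_n.+1 = 1 by have := monicP mp; rewrite lead_coefE sp.
have : p^`()`_n != 0 by rewrite coef_deriv lc pnatr_eq0.
apply: contraNT; rewrite -leqNgt => h; apply/eqP; exact: nth_default.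
Qed.

Lemma lower_open (a : \bar R) x : (a < x%:E)%E ->
  exists2 e, 0 < e & forall y, `|x - y| < e -> (a < y%:E)%E.
Proof.
case: a => [a'| |] /=.
- rewrite lte_fin => ax; exists (x - a'); first by rewrite subr_gt0.
  by move=> y; rewrite ltr_distlC lte_fin => /andP[h _]; lra.
- by rewrite ltNge leey.
- by move=> _; exists 1 => // y _; exact: ltNyr.
Qed.

Lemma upper_open (b : \bar R) x : (x%:E < b)%E ->
  exists2 e, 0 < e & forall y, `|x - y| < e -> (y%:E < b)%E.
Proof.
case: b => [b'| |] /=.
- rewrite lte_fin => xb; exists (b' - x); first by rewrite subr_gt0.
  by move=> y; rewrite ltr_distlC lte_fin => /andP[_ h]; lra.
- by move=> _; exists 1 => // y _; exact: ltry.
- by rewrite ltNge leNye.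
Qed.

Lemma cz0 (z : C) : ReC z * ReC z + ImC z * ImC z = 0 <-> z = 0.
Proof.
case: z => p q /=; split => [h|].
  have p0 : p = 0 by nra.
  have q0 : q = 0 by nra.
  by rewrite p0 q0.
by case=> -> ->; rewrite mulr0 addr0.
Qed.

End Final.

Theorem theorem3p8 (R : realType) (m n : nat) (a b : \bar R)
  (F : R -> 'M[R[i]]_(m, n)) :
  (n <= m)%N ->
  let U := [set x : R | (a < x%:E)%E /\ (x%:E < b)%E] in
  (forall i j, analytic_on U (fun x => F x i j)) ->
  let Y := [set x | U x /\ repeated_singular_values (F x)] in
  Y = U \/ (forall x, U x -> ~ limit_point Y x).
Proof.
move=> mn U hF Y.
pose Mx x := adjmx (F x) *m F x.
pose D x := resultant (char_poly (Mx x)) (char_poly (Mx x))^`().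
pose g x := complex.Re (D x) * complex.Re (D x) + complex.Im (D x) * complex.Im (D x).
have Yg : Y = [set x | U x /\ g x = 0].
  apply/seteqP; split => x [Ux h]; split => //.
    apply/cz0; rewrite /D; apply/(@rep_iff R (char_poly (Mx x)) (char_poly_monic _)).
    exact: h.
  apply/(@rep_iff R (char_poly (Mx x)) (char_poly_monic _)); apply/cz0; exact: h.
have rag : forall x0, U x0 -> ra x0 g.
  move=> x0 Ux0.
  have cF : forall i j, cla x0 (fun x => F x i j) by move=> i j; exact: an_cla (hF i j) Ux0.
  have cM : forall i j, cla x0 (fun x => Mx x i j).
    move=> i j.
    have -> : (fun x => Mx x i j) = fun x => \sum_k Num.conj (F x k i) * F x k j.
      by apply/funext => x; rewrite /Mx /adjmx !mxE; apply: eq_bigr => k _; rewrite !mxE.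
    by apply: cla_sum => k; apply: cla_mul; [apply: cla_conj|]; exact: cF.
  have cD : cla x0 D.
    apply: (cla_resultant _ _ _ n.-1 n).
    - exact: pcl_charpoly.
    - exact: pcl_deriv (pcl_charpoly _ _ _ cM).
    - by move=> x; rewrite (@size_deriv_monic R _ n (char_poly_monic _) (size_char_poly _)).
    - by move=> x; rewrite size_char_poly.
  by case: cD => c1 c2; apply: ra_add; apply: ra_mul.
have oU : open U.
  apply: (@openP R) => x [ax xb].
  have [e1 e10 H1] := @lower_open R _ _ ax; have [e2 e20 H2] := @upper_open R _ _ xb.
  exists (Num.min e1 e2); first by rewrite lt_min e10 e20.
  move=> y hy; split.
    by apply: H1; apply: lt_le_trans hy _; rewrite ge_min lexx.
  by apply: H2; apply: lt_le_trans hy _; rewrite ge_min lexx orbT.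
have iU : is_interval U.
  move=> x y [ax _] [_ yb] z /andP[xz zy]; split.
    by apply: lt_le_trans ax _; rewrite lee_fin.
  by apply: le_lt_trans yb; rewrite lee_fin.
have [[x0 Ux0 lp]|nolp] := pselect (exists2 x0, U x0 & limit_point Y x0).
  left; apply/seteqP; split => x; first by case.
  move=> Ux; rewrite Yg; split => //.
  apply: (@ident_global R U g oU iU rag x0 Ux0) => // e e0.
  have [y [yx Yy By]] := lp _ (nbhsx_ballx x0 e e0).
  rewrite Yg in Yy; case: Yy => Uy gy.
  exists (y - x0); split.
  - by rewrite subr_eq0.
  - by rewrite distrC.
  - by rewrite addrC subrK.
by right => x Ux lp; apply: nolp; exists x.
Qed.
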